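(* Let $n\ge 2$ and $1\le s\le n-1$ be integers, and let ${\bf A}=(a(i,j))_{1\le i,j\le n}$ be a real $n\times n$ matrix such that $a(i,j)\ne 0$ for every pair $(i,j)$ satisfying either $i\le j\le \min(i+n-s,n)$ or $j+s\le i$. Then the $2n\times 2n$ matrix ${\bf A}_{\rm sde}$ associated with ${\bf A}$ (defined below) has $1$ as a simple eigenvalue, and all of its other eigenvalues lie in the open unit disk $\{z\in\mathbb{C}: |z|<1\}$.
   Context: For a real number $t$, $t_+=\max(t,0)$. For a real $n\times n$ matrix ${\bf A}=(a(i,j))$ with no zero row, define the decoding weights $w_i=\big(\sum_{j=1}^n |a(i,j)|\big)^{-1}$, $1\le i\le n$, the normalized entries $\tilde a(i,j)=w_i\,a(i,j)$, the $n\times n$ matrices $\tilde{\bf A}_+=\big((\tilde a(i,j))_+\big)_{i,j}$ and $\tilde{\bf A}_-=\big((-\tilde a(i,j))_+\big)_{i,j}$, and the $2n\times 2n$ (row stochastic) block matrix $${\bf A}_{\rm sde}=\begin{pmatrix}\tilde{\bf A}_+ & \tilde{\bf A}_-\\ \tilde{\bf A}_+ & \tilde{\bf A}_-\end{pmatrix}.$$ *)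

(* Defs.v *)
From HB Require Import structures.
From mathcomp Require Import all_boot all_order all_algebra.
From mathcomp Require Import reals.
From mathcomp.real_closed Require Import complex.
Set Implicit Arguments. Unset Strict Implicit. Unset Printing Implicit Defensive.
Import Order.TTheory GRing.Theory Num.Theory.
Local Open Scope ring_scope.

Section Sde.
Variables (R : realType) (n : nat).
Implicit Type A : 'M[R]_n.

Definition dec_weight A (i : 'I_n) : R := (\sum_(j < n) `|A i j|)^-1.

Definition Atilde A : 'M[R]_n := \matrix_(i, j) (dec_weight A i * A i j).

Definition pos_part (t : R) : R := Num.max t 0.

Definition Atilde_plus A : 'M[R]_n := \matrix_(i, j) pos_part (Atilde A i j).
Definition Atilde_minus A : 'M[R]_n := \matrix_(i, j) pos_part (- Atilde A i j).

Definition A_sde A : 'M[R]_(n + n) :=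
  block_mx (Atilde_plus A) (Atilde_minus A) (Atilde_plus A) (Atilde_minus A).

End Sde.

Definition cplx_mx (R : realType) (m : nat) (B : 'M[R]_m) : 'M[R[i]]_m :=
  map_mx (fun x => (x%:C)%C) B.

(* Main.v *)
Require Import Defs.
From HB Require Import structures.
From mathcomp Require Import all_boot all_order all_algebra.
From mathcomp Require Import reals.
From mathcomp.real_closed Require Import complex.
From mathcomp Require Import ring lra.
Import Order.TTheory GRing.Theory Num.Theory.
Set Implicit Arguments. Unset Strict Implicit. Unset Printing Implicit Defensive.
Local Open Scope ring_scope.

Lemma char_poly_trmx (F : fieldType) m (G : 'M[F]_m) : char_poly G^T = char_poly G.
Proof.
rewrite /char_poly -det_tr; congr (\det _).
by apply/matrixP=> i j; rewrite !mxE eq_sym.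
Qed.

Lemma char_poly_conj (F : fieldType) m (S G : 'M[F]_m) : S \in unitmx ->
  char_poly (S *m G *m invmx S) = char_poly G.
Proof.
move=> uS; rewrite /char_poly.
have -> : char_poly_mx (S *m G *m invmx S) =
  map_mx polyC S *m char_poly_mx G *m map_mx polyC (invmx S).
  rewrite /char_poly_mx mulmxBr mulmxBl -!map_mxM mul_mx_scalar -scalemxAl.
  by rewrite -map_mxM mulmxV // map_mx1 scalemx1.
by rewrite !det_mulmx mulrC mulrA -det_mulmx -map_mxM mulVmx // map_mx1 det1 mul1r.
Qed.

Lemma simple_gen (F : fieldType) N (G : 'M[F]_N) : (0 < N)%N ->
  (const_mx 1 : 'rV[F]_N) *m G = const_mx 1 ->
  (forall (u : 'rV_N) c, u *m G = u + c *: const_mx 1 -> exists l, u = l *: const_mx 1) ->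
  mup 1 (char_poly G) = 1%N.
Proof.
case: N G => // m G _ He Hu.
pose e : 'rV[F]_(1 + m) := const_mx 1.
pose Z : 'M[F]_(m, 1 + m) := row_mx 0 1%:M.
pose S : 'M[F]_(1 + m) := col_mx e Z.
have eE : e = row_mx 1 (const_mx 1).
  apply/matrixP=> i j; rewrite !mxE; by case: split => k; rewrite ?mxE // !ord1.
have uS : S \in unitmx.
  rewrite /S eE /Z -block_mxEv unitmxE det_ublock !det1 mul1r.
  by rewrite unitr1.
pose T := S *m G *m invmx S.
have eS : row_mx 1 0 *m S = e by rewrite /S mul_row_col mul1mx mul0mx addr0.
have Ttop : usubmx T = row_mx 1 0.
  have He' : e *m G = e := He.
  rewrite /T /S !mul_col_mx col_mxKu -/S He'.
  by rewrite -{1}eS -mulmxA mulmxV // mulmx1.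
pose dl := lsubmx (dsubmx T). pose C := rsubmx (dsubmx T).
have TE : T = block_mx 1 0 dl C by rewrite block_mxEv -Ttop hsubmxK vsubmxK.
have cpT' : char_poly T = ('X - 1) * char_poly C.
  rewrite TE /char_poly /char_poly_mx.
  rewrite map_block_mx (scalar_mx_block 1 m) opp_block_mx add_block_mx.
  rewrite [X in block_mx _ X _ _](_ : _ = 0); last first.
    by apply/matrixP=> i j; rewrite !mxE subr0.
  rewrite det_lblock det_mx11 !mxE /=.
  by rewrite mulr1n polyC1.
have cpT : char_poly G = ('X - 1) * char_poly C.
  by rewrite -cpT' /T char_poly_conj.
have cC : char_poly C != 0 by apply: monic_neq0; apply: char_poly_monic.
rewrite cpT mupM ?polyXsubC_eq0 // -(expr1 ('X - 1%:P)) mup_XsubCX eqxx.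
rewrite mupNroot //; apply/negP.
rewrite -eigenvalue_root_char => /eigenvalueP [w wC wn0].
have TS : S *m G = T *m S by rewrite /T -mulmxA mulVmx // mulmx1.
pose u : 'rV[F]_(1 + m) := row_mx 0 w *m S.
have uE : u = row_mx 0 w.
  by rewrite /u /S mul_row_col mul0mx add0r /Z mul_mx_row mulmx0 mulmx1.
have uG : u *m G = u + ((w *m dl) 0 0) *: e.
  rewrite /u -mulmxA TS mulmxA TE mul_row_block !mul0mx !add0r.
  rewrite wC scale1r /S !mul_row_col mul0mx add0r addrC; congr (_ + _).
  by rewrite [X in X *m _]mx11_scalar mul_scalar_mx.
have [l ul] := Hu u _ uG.
have ul2 : row_mx 0 w = l *: e by rewrite -uE.
move: ul2; rewrite eE scale_row_mx => /eq_row_mx [h1 h2].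
have l0 : l = 0.
  by move/matrixP: h1 => /(_ 0 0); rewrite !mxE /= mulr1n mulr1 => <-.
by move: wn0; rewrite h2 l0 scale0r eqxx.
Qed.

Definition ridx n (k : 'I_(n + n)) : 'I_n :=
  match split k with inl i => i | inr i => i end.

Lemma ridxL n (i : 'I_n) : ridx (lshift n i) = i.
Proof. by rewrite /ridx (unsplitK (inl i : ('I_n + 'I_n)%type)). Qed.
Lemma ridxR n (i : 'I_n) : ridx (rshift n i) = i.
Proof. by rewrite /ridx (unsplitK (inr i : ('I_n + 'I_n)%type)). Qed.

Lemma sdeL (R : realType) n (A : 'M[R]_n) k j :
  A_sde A k (lshift n j) = Atilde_plus A (ridx k) j.
Proof.
rewrite /A_sde block_mxEv -[k]splitK; case: (split k) => i /=.
  by rewrite col_mxEu row_mxEl ridxL.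
by rewrite col_mxEd row_mxEl ridxR.
Qed.

Lemma sdeR (R : realType) n (A : 'M[R]_n) k j :
  A_sde A k (rshift n j) = Atilde_minus A (ridx k) j.
Proof.
rewrite /A_sde block_mxEv -[k]splitK; case: (split k) => i /=.
  by rewrite col_mxEu row_mxEr ridxL.
by rewrite col_mxEd row_mxEr ridxR.
Qed.

Lemma sde_sum (R : realType) (F : pzSemiRingType) (f : R -> F) n (A : 'M[R]_n) k
   (w : 'I_(n + n) -> F) :
  \sum_l w l * f (A_sde A k l) =
  \sum_j (w (lshift n j) * f (Atilde_plus A (ridx k) j) +
          w (rshift n j) * f (Atilde_minus A (ridx k) j)).
Proof.
rewrite big_split_ord big_split /=; congr (_ + _); apply: eq_bigr => j _.
  by rewrite sdeL.
by rewrite sdeR.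
Qed.

Lemma pos_part_ge0 (R : realType) (t : R) : 0 <= pos_part t.
Proof. by rewrite /pos_part le_max lexx orbT. Qed.

Lemma pos_partD (R : realType) (t : R) : pos_part t + pos_part (- t) = `|t|.
Proof.
rewrite /pos_part /Num.max oppr_lt0; case: (ltrgtP t 0) => h.
- by rewrite add0r ltr0_norm.
- by rewrite addr0 gtr0_norm.
- by rewrite h subrr normr0.
Qed.

Definition Qm (R : realType) n (A : 'M[R]_n) : 'M[R]_n :=
  \matrix_(i, j) (Atilde_plus A i j + Atilde_minus A i j).

Lemma QmE (R : realType) n (A : 'M[R]_n) i j :
  Qm A i j = dec_weight A i * `|A i j|.
Proof.
rewrite /Qm /Atilde_plus /Atilde_minus !mxE pos_partD normrM.
by rewrite ger0_norm // /dec_weight invr_ge0 sumr_ge0.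
Qed.

Lemma Qm_ge0 (R : realType) n (A : 'M[R]_n) i j : 0 <= Qm A i j.
Proof. by rewrite /Qm mxE addr_ge0 // /Atilde_plus /Atilde_minus mxE pos_part_ge0. Qed.

Lemma Qm_sum (R : realType) n (A : 'M[R]_n) i : A i i != 0 ->
  \sum_j Qm A i j = 1.
Proof.
move=> hi; under eq_bigr do rewrite QmE.
rewrite -mulr_sumr /dec_weight mulVf //.
have : 0 < \sum_j `|A i j|.
  rewrite (bigD1 i) //= ltr_pwDl ?normr_gt0 // sumr_ge0 //.
by rewrite lt0r => /andP[].
Qed.

Lemma Qm_gt0 (R : realType) n (A : 'M[R]_n) i j : A i i != 0 -> A i j != 0 ->
  0 < Qm A i j.
Proof.
move=> hi hj; rewrite QmE mulr_gt0 ?normr_gt0 // /dec_weight invr_gt0.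
by rewrite (bigD1 i) //= ltr_pwDl ?normr_gt0 // sumr_ge0.
Qed.

Lemma harmonic (R : realType) n (Q : 'M[R]_n) (y : 'I_n -> R) c :
  (0 < n)%N ->
  (forall i j, 0 <= Q i j) -> (forall i, \sum_j Q i j = 1) ->
  (forall i j : 'I_n, (i.+1 == j :> nat) || ((i == n.-1 :> nat) && (j == 0 :> nat)) ->
     0 < Q i j) ->
  (forall i, \sum_j Q i j * y j = y i + c) -> c = 0 /\ (forall i j, y i = y j).
Proof.
case: n Q y => // n Q y _ Q0 Q1 Qc Hy.
case: (@arg_maxP _ _ _ ord0 xpredT y isT) => i0 _ Hi0.
case: (@arg_minP _ _ _ ord0 xpredT y isT) => i1 _ Hi1.
have cle : c <= 0.
  have : \sum_j Q i0 j * y j <= \sum_j Q i0 j * y i0.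
    by apply: ler_sum => j _; apply: ler_wpM2l; [exact: Q0 | exact: Hi0].
  by rewrite -mulr_suml Q1 mul1r Hy; lra.
have cge : 0 <= c.
  have : \sum_j Q i1 j * y i1 <= \sum_j Q i1 j * y j.
    by apply: ler_sum => j _; apply: ler_wpM2l; [exact: Q0 | exact: Hi1].
  by rewrite -mulr_suml Q1 mul1r Hy; lra.
have c0 : c = 0 by lra.
split => //.
pose m := y i0.
have prop : forall i j, y i = m -> 0 < Q i j -> y j = m.
  move=> i j yi Qij.
  have h : \sum_k Q i k * (m - y k) = 0.
    under eq_bigr do rewrite mulrBr.
    rewrite sumrB -mulr_suml Q1 Hy yi c0 mul1r addr0 subrr //.
  have H : forall k : 'I_n.+1, true -> 0 <= Q i k * (m - y k).
    by move=> k _; rewrite mulr_ge0 // subr_ge0; exact: Hi0.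
  have := @psumr_eq0P _ _ _ _ H h j isT.
  move=> /eqP; rewrite mulf_eq0 (gt_eqF Qij) /= subr_eq0 => /eqP <- //.
have chain : forall k (i : 'I_n.+1), y i = m -> (i + k <= n)%N ->
    y (inord (i + k)) = m.
  elim=> [|k IH] i yi hk; first by rewrite addn0 inord_val.
  have hk' : (i + k < n)%N by rewrite addnS in hk.
  have h1 := IH i yi (ltnW hk').
  apply: (prop _ _ h1); apply: Qc; apply/orP; left.
  have e1 : (i + k < n.+1)%N by rewrite ltnS; exact: ltnW.
  have e2 : (i + k.+1 < n.+1)%N by [].
  by rewrite (inordK e1) (inordK e2) addnS.
have yn : y (inord n) = m.
  have := chain (n - i0)%N i0 erefl; rewrite subnKC ?leq_ord //.
  by apply.
have y0 : y ord0 = m.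
  apply: (prop _ _ yn); apply: Qc; by rewrite inordK //= eqxx.
have yall : forall j, y j = m.
  move=> j; have := chain j ord0 y0; rewrite /= add0n inord_val; apply.
  exact: leq_ord.
by move=> i j; rewrite !yall.
Qed.

Lemma disk_lemma (R : realType) (z : R[i]) (q : R) : 0 < q ->
  `|z - q%:C%C| <= (1 - q)%:C%C -> z != 1 -> `|z| < 1.
Proof.
case: z => a b q0 h zn1.
have h0 : 0 <= `|a +i* b - q%:C|%C by [].
have h2 : `|(a +i* b - q%:C)%C| ^+ 2 <= ((1 - q)%:C%C) ^+ 2.
  by rewrite !expr2; apply: ler_pM.
move: h2; rewrite -add_Re2_Im2 -rmorphXn lecR /= => h2.
have h1 : 0 <= 1 - q.
  have := le_trans h0 h; rewrite -(rmorph0 (real_complex R)) lecR //.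
have ab : (a != 1) || (b != 0).
  by move: zn1; rewrite eq_complex /= negb_and.
rewrite normc_def /= -[1](rmorph1 (real_complex R)) ltcR -sqrtr1 ltr_sqrt ?ltr01 //.
rewrite subr0 in h2.
have a1 : a <= 1 by nra.
case/orP: ab => hab.
  have a1' : a < 1 by rewrite lt_neqAle hab a1.
  nra.
have b2 : 0 < b ^+ 2 by rewrite lt0r sqr_ge0 andbT expf_eq0 (negbTE hab) andbF.
move: a1; rewrite le_eqVlt => /orP [/eqP a1|a1']; last by nra.
by subst a; lra.
Qed.
Lemma gersh (R : realType) n (Q : 'M[R]_n) (y : 'I_n -> R[i]) (z : R[i]) :
  (forall i j, 0 <= Q i j) -> (forall i, \sum_j Q i j = 1) -> (forall i, 0 < Q i i) ->
  (forall i, \sum_j y j * (Q i j)%:C%C = z * y i) -> (exists i, y i != 0) ->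
  z != 1 -> `|z| < 1.
Proof.
move=> Q0 Q1 Qd Hy Hex zn1; move: Hex Hy.
case: n Q y Q0 Q1 Qd => [|n] Q y Q0 Q1 Qd [i1 yi1] Hy; first by have := ltn_ord i1; rewrite ltn0.
pose nm i := complex.Re `|y i|.
have nmE i : `|y i| = (nm i)%:C%C by rewrite /nm normc_def.
case: (@arg_maxP _ _ _ ord0 xpredT nm isT) => i0 _ Hi0.
have Hle j : `|y j| <= `|y i0| by rewrite !nmE lecR; exact: Hi0.
have K0 : 0 < `|y i0| by apply: lt_le_trans (Hle i1); rewrite normr_gt0.
apply: (disk_lemma (Qd i0)) => //.
set q := Q i0 i0.
have key : (z - q%:C%C) * y i0 = \sum_(j | j != i0) y j * (Q i0 j)%:C%C.
  by rewrite mulrBl -Hy (bigD1 i0) //=; ring.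
have S1 : \sum_(j | j != i0) Q i0 j = 1 - q.
  by have := Q1 i0; rewrite (bigD1 i0) //= -/q => <-; rewrite addrC addrK.
have : `|z - q%:C%C| * `|y i0| <= (1 - q)%:C%C * `|y i0|.
  rewrite -normrM key.
  apply: le_trans (ler_norm_sum _ _ _) _.
  apply: (@le_trans _ _ (\sum_(j | j != i0) `|y i0| * (Q i0 j)%:C%C)).
    apply: ler_sum => j _; rewrite normrM (ger0_norm (_ : 0 <= (Q i0 j)%:C%C)).
      by apply: ler_wpM2r; [rewrite ler0c | exact: Hle].
    by rewrite ler0c.
  by rewrite -mulr_sumr -rmorph_sum S1 mulrC.
by rewrite ler_pM2r.
Qed.

Lemma ReD (R : realType) (x y : R[i]) : complex.Re (x + y) = complex.Re x + complex.Re y.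
Proof. by case: x y => [a b] [c d]. Qed.
Lemma ImD (R : realType) (x y : R[i]) : complex.Im (x + y) = complex.Im x + complex.Im y.
Proof. by case: x y => [a b] [c d]. Qed.
Lemma Re_sum (R : realType) (I : finType) (F : I -> R[i]) :
  complex.Re (\sum_i F i) = \sum_i complex.Re (F i).
Proof. by elim/big_rec2: _ => // i a b _ <-; rewrite ReD. Qed.
Lemma Im_sum (R : realType) (I : finType) (F : I -> R[i]) :
  complex.Im (\sum_i F i) = \sum_i complex.Im (F i).
Proof. by elim/big_rec2: _ => // i a b _ <-; rewrite ImD. Qed.
Lemma ReMr (R : realType) (w : R[i]) (r : R) :
  complex.Re (w * r%:C%C) = complex.Re w * r.
Proof. by case: w => a b /=; rewrite mulr0 subr0. Qed.
Lemma ImMr (R : realType) (w : R[i]) (r : R) :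
  complex.Im (w * r%:C%C) = complex.Im w * r.
Proof. by case: w => a b /=; rewrite mulr0 add0r. Qed.
Lemma complex_ext (R : realType) (x y : R[i]) :
  complex.Re x = complex.Re y -> complex.Im x = complex.Im y -> x = y.
Proof. by case: x y => [a b] [c d] /= -> ->. Qed.

Lemma ridx_cases n (k : 'I_(n + n)) : k = lshift n (ridx k) \/ k = rshift n (ridx k).
Proof.
rewrite -[k]splitK; case: (split k) => i /=; [left|right].
  by rewrite ridxL.
by rewrite ridxR.
Qed.

From mathcomp Require Import zify.

Unset Implicit Arguments.
Unset Strict Implicit.

Theorem proposition1 (R : realType) (n s : nat) (A : 'M[R]_n) :
  (2 <= n)%N -> (1 <= s)%N -> (s <= n - 1)%N ->
  (forall i j : 'I_n,
     ((i <= j)%N && (j <= i + (n - s))%N) || (j + s <= i)%N -> A i j != 0) ->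
  let B := cplx_mx (A_sde A) in
  [/\ eigenvalue B 1,
      mup 1 (char_poly B) = 1%N &
      forall z : R[i], eigenvalue B z -> z != 1 -> `|z| < 1].
Proof.
move=> n2 s1 sn HA B.
have diag i : A i i != 0.
  by apply: HA; rewrite leqnn leq_addr.
have Q0 i j : 0 <= Qm A i j := Qm_ge0 A i j.
have Q1 i : \sum_j Qm A i j = 1 := Qm_sum (diag i).
have Qd i : 0 < Qm A i i := Qm_gt0 (diag i) (diag i).
have Qc (i j : 'I_n) : (i.+1 == j :> nat) || ((i == n.-1 :> nat) && (j == 0 :> nat)) ->
    0 < Qm A i j.
  move=> h; apply: Qm_gt0 (diag i) (HA i j _).
  case/orP: h => [/eqP h|/andP[/eqP h1 /eqP h2]]; apply/orP; [left|right].
    apply/andP; split; lia.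
  lia.
have BE k l : B k l = (A_sde A k l)%:C%C by rewrite mxE.
pose G := B^T.
have GE k l : G l k = (A_sde A k l)%:C%C by rewrite /G mxE BE.
have cpG : char_poly G = char_poly B by rewrite char_poly_trmx.
pose N := (n + n)%N.
have N0 : (0 < n + n)%N by lia.
have n0 : (0 < n)%N by lia.
pose k0 : 'I_(n + n) := lshift n (Ordinal n0).
have ones : (const_mx 1 : 'rV[R[i]]_(n + n)) *m G = const_mx 1.
  apply/matrixP => i k; rewrite mxE [RHS]mxE.
  under eq_bigr do rewrite GE [const_mx _ _ _]mxE.
  rewrite (sde_sum (real_complex R) A k (fun _ => 1)).
  under eq_bigr do rewrite !mul1r -rmorphD.
  rewrite -rmorph_sum -(rmorph1 (real_complex R)) -(Q1 (ridx k)).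
  have -> : \sum_j Qm A (ridx k) j = \sum_j (Atilde_plus A (ridx k) j +
      Atilde_minus A (ridx k) j) by apply: eq_bigr => j _; rewrite mxE.
  by [].
have realL (x : 'I_(n + n) -> R) c :
    (forall k, \sum_l x l * A_sde A k l = x k + c) -> c = 0 /\ forall k l, x k = x l.
  move=> Hx.
  have Hs k : \sum_j (x (lshift n j) * Atilde_plus A (ridx k) j +
          x (rshift n j) * Atilde_minus A (ridx k) j) = x k + c.
    by rewrite -Hx (sde_sum id).
  have LR i : x (lshift n i) = x (rshift n i).
    have h1 := Hs (lshift n i); have h2 := Hs (rshift n i).
    rewrite ridxL in h1; rewrite ridxR h1 in h2.
    exact: addIr h2.
  pose y j := x (lshift n j).
  have Hy i : \sum_j Qm A i j * y j = y i + c.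
    rewrite /y -(Hs (lshift n i)) ridxL; apply: eq_bigr => j _.
    by rewrite -LR mxE mulrC mulrDr.
  have [c0 yc] := harmonic n0 Q0 Q1 Qc Hy.
  split => // k l.
  have xk m : x m = y (ridx m).
    by case: (ridx_cases m) => {1}->; rewrite /y ?LR.
  by rewrite !xk; apply: yc.
split.
- rewrite eigenvalue_root_char -cpG -eigenvalue_root_char.
  apply/eigenvalueP; exists (const_mx 1); first by rewrite ones scale1r.
  by apply/eqP => /matrixP /(_ 0 k0); rewrite !mxE; apply/eqP; rewrite oner_eq0.
- rewrite -cpG; apply: simple_gen N0 ones _ => u c Hu.
  have Hk k : \sum_l u 0 l * (A_sde A k l)%:C%C = u 0 k + c.
    move/matrixP: Hu => /(_ 0 k); rewrite mxE.
    under eq_bigr do rewrite GE.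
    by move=> ->; rewrite !mxE mulr1.
  have hre' k : \sum_l complex.Re (u 0 l) * A_sde A k l = complex.Re (u 0 k) + complex.Re c.
    by rewrite -ReD -(Hk k) Re_sum; apply: eq_bigr => l _; rewrite ReMr.
  have him' k : \sum_l complex.Im (u 0 l) * A_sde A k l = complex.Im (u 0 k) + complex.Im c.
    by rewrite -ImD -(Hk k) Im_sum; apply: eq_bigr => l _; rewrite ImMr.
  have [_ hre] := realL (fun l => complex.Re (u 0 l)) _ hre'.
  have [_ him] := realL (fun l => complex.Im (u 0 l)) _ him'.
  exists (u 0 k0); apply/matrixP => i l; rewrite !mxE ord1 mulr1.
  by apply: complex_ext; [exact: hre | exact: him].
- move=> z; rewrite eigenvalue_root_char -cpG -eigenvalue_root_char.
  move=> /eigenvalueP [v vG vn0] zn1.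
  have [->|z0] := eqVneq z 0; first by rewrite normr0 ltr01.
  have Hk k : \sum_j (v 0 (lshift n j) * (Atilde_plus A (ridx k) j)%:C%C +
          v 0 (rshift n j) * (Atilde_minus A (ridx k) j)%:C%C) = z * v 0 k.
    rewrite -(sde_sum (real_complex R) A k (fun l => v 0 l)).
    move/matrixP: vG => /(_ 0 k); rewrite mxE [RHS]mxE => <-.
    by apply: eq_bigr => l _; rewrite GE.
  have LR i : v 0 (lshift n i) = v 0 (rshift n i).
    have h1 := Hk (lshift n i); have h2 := Hk (rshift n i).
    rewrite ridxL in h1; rewrite ridxR h1 in h2.
    move/eqP: h2; rewrite -subr_eq0 -mulrBr mulf_eq0 (negbTE z0) subr_eq0 /=.
    by move/eqP.
  pose y j := v 0 (lshift n j).
  apply: (@gersh R n (Qm A) y z Q0 Q1 Qd) => //.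
    move=> i; rewrite /y -(Hk (lshift n i)) ridxL; apply: eq_bigr => j _.
    by rewrite -LR mxE rmorphD mulrDr.
  apply/existsP; apply: contraNT vn0; rewrite negb_exists => /forallP H.
  apply/eqP/matrixP => i l; rewrite ord1 mxE.
  have yl : v 0 l = y (ridx l).
    by case: (ridx_cases l) => {1}->; rewrite /y ?LR.
  by rewrite yl; apply/eqP; move: (H (ridx l)); rewrite negbK.
Qed.
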